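(* The Banach lattice $\ell_\infty$ does not have the unbounded Grothendieck property.
   Context: For a Banach lattice $E$ with dual $E'$, a sequence $(x_n')\subseteq E'$ is unbounded weak$^*$ convergent to $0$ (written $x_n'\xrightarrow{uaw^*}0$) if $|x_n'|\wedge u'\to 0$ in the weak$^*$ topology $\sigma(E',E)$ for every $u'\in E'_+$. $E$ has the unbounded Grothendieck property if every norm bounded sequence $(x_n')\subseteq E'$ with $x_n'\xrightarrow{uaw^*}0$ converges to $0$ weakly (in $\sigma(E',E'')$). *)

(* Defs.v *)
From Stdlib Require Import Reals.
From Coquelicot Require Import Coquelicot.
Open Scope R_scope.

Definition seqR := nat -> R.

Definition bdd (x : seqR) : Prop := exists M, forall n, Rabs (x n) <= M.

Definition normle (x : seqR) (M : R) : Prop := forall n, Rabs (x n) <= M.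

Definition sadd (x y : seqR) : seqR := fun n => x n + y n.
Definition ssub (x y : seqR) : seqR := fun n => x n - y n.
Definition sscal (a : R) (x : seqR) : seqR := fun n => a * x n.
Definition spos (x : seqR) : seqR := fun n => Rmax (x n) 0.
Definition sneg (x : seqR) : seqR := fun n => Rmax (- x n) 0.

(** * The dual E' = (l_infty)'  (functionals are only looked at on l_infty) *)
Definition functional := seqR -> R.

Definition dual_normle (f : functional) (C : R) : Prop :=
  forall x M, normle x M -> Rabs (f x) <= C * M.

Definition is_dual (f : functional) : Prop :=
  (forall x y, bdd x -> bdd y -> f (sadd x y) = f x + f y) /\
  (forall a x, bdd x -> f (sscal a x) = a * f x) /\
  (exists C, dual_normle f C).

Definition dual_pos (f : functional) : Prop :=
  is_dual f /\ (forall x, bdd x -> (forall n, 0 <= x n) -> 0 <= f x).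

(** Lattice operations of E' (Riesz–Kantorovich formulas): defined on the
    positive cone and extended by x = x^+ - x^-. *)
Definition abs_pos (f : functional) (x : seqR) : R :=
  real (Lub_Rbar (fun r => exists y, bdd y /\ (forall n, Rabs (y n) <= x n) /\ r = f y)).

Definition dabs (f : functional) : functional :=
  fun x => abs_pos f (spos x) - abs_pos f (sneg x).

Definition meet_pos (f g : functional) (x : seqR) : R :=
  real (Glb_Rbar (fun r => exists y, bdd y /\ (forall n, 0 <= y n <= x n) /\
                                     r = f y + g (ssub x y))).

Definition dmeet (f g : functional) : functional :=
  fun x => meet_pos f g (spos x) - meet_pos f g (sneg x).

Definition uawstar_null (f : nat -> functional) : Prop :=
  forall u, dual_pos u -> forall x, bdd x ->
    is_lim_seq (fun n => dmeet (dabs (f n)) u x) 0.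

Definition is_bidual (Phi : functional -> R) : Prop :=
  (forall f g, is_dual f -> is_dual g -> Phi (fun x => f x + g x) = Phi f + Phi g) /\
  (forall a f, is_dual f -> Phi (fun x => a * f x) = a * Phi f) /\
  (exists D, forall f C, is_dual f -> dual_normle f C -> Rabs (Phi f) <= D * C).

Definition weakly_null (f : nat -> functional) : Prop :=
  forall Phi, is_bidual Phi -> is_lim_seq (fun n => Phi (f n)) 0.

Definition linf_unbounded_grothendieck : Prop :=
  forall f : nat -> functional,
    (forall n, is_dual (f n)) ->
    (exists C, forall n, dual_normle (f n) C) ->
    uawstar_null f -> weakly_null f.

(* Main.v *)
Require Import Defs.
From Stdlib Require Import Reals.
From Coquelicot Require Import Coquelicot.
From Stdlib Require Import Lra Lia FunctionalExtensionality.

Definition delta (n : nat) : functional := fun x => x n.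
Definition ee (n : nat) : seqR := fun k => if Nat.eq_dec k n then 1 else 0.
Definition ind (N : nat) : seqR := fun k => if Nat.leb k N then 1 else 0.

Lemma abs_pos_delta n z : (forall k, 0 <= z k) -> abs_pos (delta n) z = z n.
Proof.
  intros Hz. unfold abs_pos.
  set (E := fun r => exists y, bdd y /\ (forall k, Rabs (y k) <= z k) /\ r = delta n y).
  assert (ub : is_ub_Rbar E (z n)).
  { intros r [y [_ [Hy ->]]]. unfold delta. simpl.
    specialize (Hy n). pose proof (Rle_abs (y n)). lra. }
  assert (mem : E (z n)).
  { exists (fun k => if Nat.eq_dec k n then z n else 0). split; [|split].
    - exists (Rabs (z n)). intros k. destruct (Nat.eq_dec k n); rewrite ?Rabs_R0; try lra.
      apply Rabs_pos.
    - intros k. destruct (Nat.eq_dec k n). subst; rewrite Rabs_right; [lra| apply Rle_ge, Hz].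
      rewrite Rabs_R0; apply Hz.
    - unfold delta. destruct (Nat.eq_dec n n); congruence. }
  destruct (Lub_Rbar_correct E) as [H1 H2].
  rewrite (Rbar_le_antisym (Lub_Rbar E) (z n)); [reflexivity| |].
  - apply H2; exact ub.
  - apply H1; exact mem.
Qed.

Lemma dabs_delta n : dabs (delta n) = delta n.
Proof.
  apply functional_extensionality; intros x. unfold dabs.
  rewrite !abs_pos_delta.
  - unfold spos, sneg, delta, Rmax. destruct (Rle_dec (x n) 0); destruct (Rle_dec (- x n) 0); lra.
  - intros k; unfold sneg; apply Rmax_r.
  - intros k; unfold spos; apply Rmax_r.
Qed.

Lemma ee_bdd n : bdd (ee n).
Proof. exists 1. intros k; unfold ee; destruct (Nat.eq_dec k n); rewrite ?Rabs_R1, ?Rabs_R0; lra. Qed.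

Lemma meet_bounds u n z M : dual_pos u -> (forall k, 0 <= z k <= M) ->
  0 <= meet_pos (delta n) u z <= z n * u (ee n).
Proof.
  intros [[Hadd [Hsc _]] Hpos] Hz. unfold meet_pos.
  set (E := fun r => exists y, bdd y /\ (forall k, 0 <= y k <= z k) /\ r = delta n y + u (ssub z y)).
  assert (lb : is_lb_Rbar E 0).
  { intros r [y [_ [Hy ->]]]. simpl. unfold delta.
    assert (0 <= u (ssub z y)).
    { apply Hpos. exists M. intros k. unfold ssub. specialize (Hy k). specialize (Hz k).
      rewrite Rabs_right; lra. intros k; unfold ssub; specialize (Hy k); lra. }
    specialize (Hy n); lra. }
  assert (mem : E (z n * u (ee n))).
  { exists (fun k => if Nat.eq_dec k n then 0 else z k). split; [|split].
    - exists M. intros k. specialize (Hz k). destruct (Nat.eq_dec k n).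
      rewrite Rabs_R0; lra. rewrite Rabs_right; lra.
    - intros k. specialize (Hz k). destruct (Nat.eq_dec k n); lra.
    - unfold delta. destruct (Nat.eq_dec n n); [|congruence].
      replace (ssub z (fun k => if Nat.eq_dec k n then 0 else z k)) with (sscal (z n) (ee n)).
      rewrite Hsc by apply ee_bdd. lra.
      apply functional_extensionality; intros k. unfold ssub, sscal, ee.
      destruct (Nat.eq_dec k n); subst; lra. }
  destruct (Glb_Rbar_correct E) as [H1 H2].
  specialize (H1 _ mem). specialize (H2 _ lb).
  destruct (Glb_Rbar E); simpl in *; try contradiction; lra.
Qed.

Lemma u_ee_lim u : dual_pos u -> is_lim_seq (fun n => u (ee n)) 0.
Proof.
  intros [[Hadd [Hsc _]] Hpos] .
  assert (bind : forall N, bdd (ind N)).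
  { intros N. exists 1. intros k; unfold ind; destruct (Nat.leb k N); rewrite ?Rabs_R1, ?Rabs_R0; lra. }
  assert (Hind : forall N, u (ind N) = sum_n (fun k => u (ee k)) N).
  { induction N.
    - rewrite sum_O. f_equal. apply functional_extensionality; intros k.
      unfold ind, ee. destruct k; simpl; reflexivity.
    - rewrite sum_Sn, <- IHN. replace (ind (S N)) with (sadd (ind N) (ee (S N))).
      { rewrite Hadd; [reflexivity | auto | apply ee_bdd]. }
      apply functional_extensionality; intros k. unfold sadd, ind, ee.
      destruct (Nat.eq_dec k (S N)).
      + subst. rewrite Nat.leb_refl. replace (Nat.leb (S N) N) with false. lra.
        symmetry; apply Nat.leb_gt; auto.
      + destruct (Nat.leb k N) eqn:E1; destruct (Nat.leb k (S N)) eqn:E2; try lra.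
        * apply Nat.leb_le in E1; apply Nat.leb_gt in E2; exfalso; lia.
        * apply Nat.leb_gt in E1; apply Nat.leb_le in E2. exfalso. lia. }
  assert (Hee : forall k, 0 <= u (ee k)).
  { intros k. apply Hpos. apply ee_bdd. intros j; unfold ee; destruct (Nat.eq_dec j k); lra. }
  assert (b1 : bdd (fun _ => 1)). { exists 1. intros; rewrite Rabs_R1; lra. }
  assert (Hle : forall N, u (ind N) <= u (fun _ => 1)).
  { intros N. replace (fun _ : nat => 1) with (sadd (ind N) (ssub (fun _ => 1) (ind N))).
    assert (bd : bdd (ssub (fun _ => 1) (ind N))).
    { exists 1. intros k; unfold ssub, ind; destruct (Nat.leb k N);
      [replace (1-1) with 0 by lra; rewrite Rabs_R0 | replace (1-0) with 1 by lra; rewrite Rabs_R1]; lra. }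
    rewrite Hadd; auto.
    assert (0 <= u (ssub (fun _ => 1) (ind N))).
    { apply Hpos; auto. intros k; unfold ssub, ind; destruct (Nat.leb k N); lra. }
    lra.
    apply functional_extensionality; intros k; unfold sadd, ssub; lra. }
  apply ex_series_lim_0.
  destruct (ex_finite_lim_seq_incr (sum_n (fun k => u (ee k))) (u (fun _ => 1))) as [l Hl].
  - intros n. rewrite sum_Sn. specialize (Hee (S n)). unfold plus; simpl. lra.
  - intros n. rewrite <- Hind. apply Hle.
  - exists l. exact Hl.
Qed.

Theorem lemma2p3 : ~ linf_unbounded_grothendieck.
Proof.
  intros H.
  assert (Hw : weakly_null delta).
  { apply H.
    - intros n. split; [|split].
      + intros; reflexivity.
      + intros; reflexivity.
      + exists 1. intros x M Hx. unfold delta. specialize (Hx n). lra.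
    - exists 1. intros n x M Hx. unfold delta. specialize (Hx n). lra.
    - intros u Hu x [M Hx].
      assert (HM : 0 <= M). { specialize (Hx 0%nat). pose proof (Rabs_pos (x 0%nat)); lra. }
      assert (Hl := u_ee_lim u Hu).
      apply (is_lim_seq_le_le (fun n => - (M * u (ee n))) _ (fun n => M * u (ee n))).
      + intros n. rewrite dabs_delta. unfold dmeet.
        assert (Hp : forall k, 0 <= spos x k <= M).
        { intros k; unfold spos, Rmax; specialize (Hx k); apply Rabs_le_between in Hx.
          destruct (Rle_dec (x k) 0); lra. }
        assert (Hn : forall k, 0 <= sneg x k <= M).
        { intros k; unfold sneg, Rmax; specialize (Hx k); apply Rabs_le_between in Hx.
          destruct (Rle_dec (- x k) 0); lra. }
        pose proof (meet_bounds u n _ _ Hu Hp).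
        pose proof (meet_bounds u n _ _ Hu Hn).
        specialize (Hp n). specialize (Hn n).
        assert (0 <= u (ee n)).
        { destruct Hu as [_ Hpos]. apply Hpos. apply ee_bdd. intros j; unfold ee; destruct (Nat.eq_dec j n); lra. }
        assert (spos x n * u (ee n) <= M * u (ee n)) by (apply Rmult_le_compat_r; lra).
        assert (sneg x n * u (ee n) <= M * u (ee n)) by (apply Rmult_le_compat_r; lra).
        lra.
      + replace (Finite 0) with (Rbar_opp (Rbar_mult M 0)) by (simpl; f_equal; ring).
        apply (is_lim_seq_opp (fun n => M * u (ee n))). apply is_lim_seq_scal_l; exact Hl.
      + replace (Finite 0) with (Rbar_mult M 0) by (simpl; f_equal; ring).
        apply is_lim_seq_scal_l; exact Hl. }
  specialize (Hw (fun f => f (fun _ => 1))).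
  assert (Hb : is_bidual (fun f => f (fun _ => 1))).
  { split; [|split].
    - intros; reflexivity.
    - intros; reflexivity.
    - exists 1. intros f C _ Hf. specialize (Hf (fun _ => 1) 1).
      assert (normle (fun _ => 1) 1) by (intros k; rewrite Rabs_R1; lra).
      specialize (Hf H0). lra. }
  specialize (Hw Hb). unfold delta in Hw.
  apply is_lim_seq_unique in Hw. rewrite Lim_seq_const in Hw.
  injection Hw. lra.
Qed.
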